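(* Let $\mathbf L\in\mathbb R_+^{n\times k}$ and $\mathbf p\in\operatorname{relint}(\Delta_n)$. Then for any $t_1,t_2\in\operatorname{argmin}_{t'\in[k]}\mathbf p^\top\boldsymbol\ell_{t'}$ (i.e. $\mathbf p\in\mathcal Q^{\mathbf L}_{t_1}\cap\mathcal Q^{\mathbf L}_{t_2}$), we have $\mu_{\mathcal Q^{\mathbf L}_{t_1}}(\mathbf p)=\mu_{\mathcal Q^{\mathbf L}_{t_2}}(\mathbf p)$.
   Context: Notation: $[m]=\{1,\dots,m\}$; $\Delta_n=\{\mathbf p\in\mathbb R_+^n:\sum_i p_i=1\}$, whose relative interior is the set of $\mathbf p\in\Delta_n$ with all entries strictly positive. A loss matrix $\mathbf L\in\mathbb R_+^{n\times k}$ has columns $\boldsymbol\ell_t$. Trigger probability set: $\mathcal Q^{\mathbf L}_t=\{\mathbf p\in\Delta_n: t\in\operatorname{argmin}_{t'\in[k]}\mathbf p^\top\boldsymbol\ell_{t'}\}$. For a convex set $\mathcal Q\subseteq\mathbb R^n$ and $\mathbf p\in\mathcal Q$, $\mathcal F_{\mathcal Q}(\mathbf p)=\{\mathbf v:\exists\epsilon_0>0,\ \mathbf p+\epsilon\mathbf v\in\mathcal Q\ \forall\epsilon\in(0,\epsilon_0)\}$ and $\mu_{\mathcal Q}(\mathbf p)=\dim(\mathcal F_{\mathcal Q}(\mathbf p)\cap(-\mathcal F_{\mathcal Q}(\mathbf p)))$. *)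

(* Defs.v *)
(* The paper works over the reals; we state it over an
   arbitrary real field R (a generalization, purely algebraic statement). *)
From HB Require Import structures.
From mathcomp Require Import all_boot all_order all_algebra.
From Stdlib Require Import ClassicalDescription.
Set Implicit Arguments. Unset Strict Implicit. Unset Printing Implicit Defensive.
Import Order.TTheory GRing.Theory Num.Theory.
Local Open Scope ring_scope.

Definition pbool (P : Prop) : bool :=
  if excluded_middle_informative P then true else false.

Section Defs.
Variable R : realFieldType.

Definition simplex n (p : 'rV[R]_n) : Prop :=
  (forall i, 0 <= p 0 i) /\ \sum_(i < n) p 0 i = 1.

Definition relint_simplex n (p : 'rV[R]_n) : Prop :=
  (forall i, 0 < p 0 i) /\ \sum_(i < n) p 0 i = 1.

(* p^T l_t, where l_t is column t of L *)
Definition ploss n k (L : 'M[R]_(n, k)) (p : 'rV[R]_n) (t : 'I_k) : R :=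
  \sum_(i < n) p 0 i * L i t.

Definition is_argmin n k (L : 'M[R]_(n, k)) (p : 'rV[R]_n) (t : 'I_k) : Prop :=
  forall t' : 'I_k, ploss L p t <= ploss L p t'.

Definition trigger n k (L : 'M[R]_(n, k)) (t : 'I_k) (p : 'rV[R]_n) : Prop :=
  simplex p /\ is_argmin L p t.

Definition feasible_dirs n (Q : 'rV[R]_n -> Prop) (p : 'rV[R]_n)
    (v : 'rV[R]_n) : Prop :=
  exists e0 : R, 0 < e0 /\ forall e : R, 0 < e -> e < e0 -> Q (p + e *: v).

Definition lineality n (Q : 'rV[R]_n -> Prop) (p : 'rV[R]_n)
    (v : 'rV[R]_n) : Prop :=
  feasible_dirs Q p v /\ feasible_dirs Q p (- v).

Definition has_indep n (S : 'rV[R]_n -> Prop) (d : nat) : Prop :=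
  exists M : 'M[R]_(d, n), row_free M /\ forall i, S (row i M).

(* dimension (of the linear span) of S: the largest number of linearly
   independent vectors in S (this number is at most n) *)
Definition dimset n (S : 'rV[R]_n -> Prop) : nat :=
  (\max_(d < n.+1 | pbool (has_indep S d)) d)%N.

Definition mu n (Q : 'rV[R]_n -> Prop) (p : 'rV[R]_n) : nat :=
  dimset (lineality Q p).

End Defs.

(* Main.v *)
Require Import Defs.
From mathcomp Require Import all_boot all_order all_algebra.
From Stdlib Require Import FunctionalExtensionality PropExtensionality.
Import Order.TTheory GRing.Theory Num.Theory.
Local Open Scope ring_scope.

Lemma ploss_lin (R : realFieldType) n k (L : 'M[R]_(n, k)) p w e t :
  ploss L (p + e *: w) t = ploss L p t + e * ploss L w t.
Proof.
rewrite /ploss mulr_sumr -big_split /=; apply: eq_bigr => i _.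
by rewrite !mxE mulrDl mulrA.
Qed.

Lemma ploss_opp (R : realFieldType) n k (L : 'M[R]_(n, k)) w t :
  ploss L (- w) t = - ploss L w t.
Proof.
rewrite /ploss -sumrN; apply: eq_bigr => i _.
by rewrite !mxE mulNr.
Qed.

Lemma lin_transfer (R : realFieldType) n k (L : 'M[R]_(n, k)) p t1 t2 v :
  is_argmin L p t1 -> is_argmin L p t2 ->
  lineality (trigger L t1) p v -> lineality (trigger L t2) p v.
Proof.
move=> h1 h2 [[e1 [e1p H1]] [e2 [e2p H2]]].
have ea : ploss L p t1 = ploss L p t2 by apply/le_anti; rewrite h1 h2.
have key : forall e, 0 < e -> e < Num.min e1 e2 ->
    ploss L v t1 = ploss L v t2.
  move=> e ep; rewrite lt_min => /andP[le1 le2].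
  have [_ A] := H1 e ep le1. have [_ B] := H2 e ep le2.
  have := A t2; have := B t2.
  rewrite !ploss_lin !ploss_opp ea lerD2l => hb ha.
  rewrite lerD2l in ha.
  rewrite !mulrN lerN2 in hb.
  apply/le_anti; rewrite (ler_pM2l ep) in ha; rewrite (ler_pM2l ep) in hb.
  by rewrite ha hb.
have m0 : 0 < Num.min e1 e2 by rewrite lt_min e1p e2p.
have eq : ploss L v t1 = ploss L v t2.
  apply: (key (Num.min e1 e2 / 2%:R)).
    by rewrite divr_gt0.
  by rewrite ltr_pdivrMr // ltr_pMr // ltr1n.
split.
- exists (Num.min e1 e2); split => // e ep; rewrite lt_min => /andP[le1 le2].
  have [S A] := H1 e ep le1; split => // t'.
  by rewrite ploss_lin -ea -eq -ploss_lin.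
- exists (Num.min e1 e2); split => // e ep; rewrite lt_min => /andP[le1 le2].
  have [S A] := H2 e ep le2; split => // t'.
  by rewrite ploss_lin !ploss_opp -ea -eq -ploss_opp -ploss_lin.
Qed.

Theorem mainTheorem12 (R : realFieldType) (n k : nat) (L : 'M[R]_(n, k))
    (p : 'rV[R]_n) (t1 t2 : 'I_k) :
  (forall i j, 0 <= L i j) ->
  relint_simplex p ->
  is_argmin L p t1 -> is_argmin L p t2 ->
  mu (trigger L t1) p = mu (trigger L t2) p.
Proof.
move=> _ _ h1 h2; rewrite /mu.
have -> : lineality (trigger L t1) p = lineality (trigger L t2) p.
  apply: functional_extensionality => v; apply: propositional_extensionality.
  by split; apply: lin_transfer.
by [].
Qed.
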